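(* If $S,T\in \mathcal{B}_{A}(\mathcal{H})$, then $$d\omega _{A_{0}}\left( \begin{bmatrix} S & T \\ T & S \end{bmatrix} \right) =d\omega _{A_{0}}\left( \begin{bmatrix} S-T & 0 \\ 0 & S+T \end{bmatrix} \right).$$ In particular, $$d\omega _{A_{0}}\left( \begin{bmatrix} 0 & S \\ S & 0 \end{bmatrix} \right) =d\omega _{A}\left( S\right).$$
   Context: $\mathcal{H}$ is a complex Hilbert space and $A\in\mathcal{B}(\mathcal{H})$ is a positive operator; $\langle x,z\rangle_A=\langle Ax,z\rangle$ and $\|z\|_A=\|A^{1/2}z\|$. $\mathcal{B}_A(\mathcal{H})$ denotes the set of bounded operators $S$ on $\mathcal{H}$ admitting an $A$-adjoint, i.e. with $\mathcal{R}(S^*A)\subseteq\mathcal{R}(A)$. The $A$-Davis-Wielandt radius is $d\omega_A(S)=\sup\{(|\langle Sz,z\rangle_A|^2+\|Sz\|_A^4)^{1/2}: z\in\mathcal{H},\ \|z\|_A=1\}$. $A_0=\begin{bmatrix} A&0\\0&A\end{bmatrix}$ is the positive operator on $\mathcal{H}\oplus\mathcal{H}$, inducing $\langle x,z\rangle_{A_0}=\langle x_1,z_1\rangle_A+\langle x_2,z_2\rangle_A$ for $x=(x_1,x_2)$, $z=(z_1,z_2)$, and $d\omega_{A_0}$ is the corresponding $A_0$-Davis-Wielandt radius on $\mathcal{H}\oplus\mathcal{H}$. *)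

(* Defs.v *)
From mathcomp Require Import all_boot all_algebra.
From mathcomp Require Import complex.
From mathcomp Require Import all_classical reals constructive_ereal ereal.
Import GRing.Theory Num.Theory.

Set Implicit Arguments.
Unset Strict Implicit.
Unset Printing Implicit Defensive.

Local Open Scope ring_scope.
Local Open Scope complex_scope.
Local Open Scope classical_set_scope.

Section Hilbert.
Variable R : realType.

Section OnV.
Variable V : lmodType R[i].
Variable ip : V -> V -> R[i].

Definition is_inner_product : Prop :=
  (forall (a : R[i]) (x y z : V), ip (a *: x + y) z = a * ip x z + ip y z) /\
  (forall x y : V, ip y x = (ip x y)^*) /\
  (forall x : V, 0 <= ip x x) /\
  (forall x : V, ip x x = 0 -> x = 0).

Definition hnorm (x : V) : R := Num.sqrt (complex.Re (ip x x)).

Definition is_complete : Prop :=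
  forall u : nat -> V,
    (forall e : R, 0 < e -> exists N : nat, forall m n : nat,
        (N <= m)%N -> (N <= n)%N -> hnorm (u m - u n) < e) ->
    exists l : V, forall e : R, 0 < e -> exists N : nat, forall n : nat,
        (N <= n)%N -> hnorm (u n - l) < e.

Definition is_hilbert : Prop := is_inner_product /\ is_complete.

Definition bounded_op (S : V -> V) : Prop :=
  (forall (a : R[i]) (x y : V), S (a *: x + y) = a *: S x + S y) /\
  (exists M : R, forall x : V, hnorm (S x) <= M * hnorm x).

Definition positive_op (A : V -> V) : Prop :=
  bounded_op A /\ (forall x : V, 0 <= ip (A x) x).

Definition is_adjoint (S S' : V -> V) : Prop :=
  forall x y : V, ip (S x) y = ip x (S' y).

Definition in_BA (A S : V -> V) : Prop :=
  bounded_op S /\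
  exists S' : V -> V, is_adjoint S S' /\
    (forall x : V, exists y : V, S' (A x) = A y).

Definition ipA (A : V -> V) (x z : V) : R[i] := ip (A x) z.

Definition ipA0 (A : V -> V) (x z : V * V) : R[i] :=
  ipA A x.1 z.1 + ipA A x.2 z.2.

Definition opmat (S T U W : V -> V) (x : V * V) : V * V :=
  (S x.1 + T x.2, U x.1 + W x.2).

End OnV.

Section DW.
Variable W : Type.
Variable sip : W -> W -> R[i].

Definition snorm (z : W) : R := Num.sqrt (complex.Re (sip z z)).

Definition dw (S : W -> W) : \bar R :=
  ereal_sup [set (Num.sqrt (complex.Re `|sip (S z) z| ^+ 2 + snorm (S z) ^+ 4))%:E
            | z in [set z | snorm z = 1]].
End DW.

End Hilbert.

(* Main.v *)
Require Import Defs.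
From mathcomp Require Import all_boot all_algebra.
From mathcomp Require Import complex.
From mathcomp Require Import all_classical reals constructive_ereal ereal.
From mathcomp Require Import ring lra.
Import order.Order.TTheory GRing.Theory Num.Theory.
Set Implicit Arguments.
Unset Strict Implicit.
Local Open Scope ring_scope.
Local Open Scope complex_scope.
Section Alg.
Variable R : realType.
Variable V : lmodType R[i].

Lemma lin_add (f : V -> V) : (forall (a : R[i]) x y, f (a *: x + y) = a *: f x + f y) ->
  forall x y, f (x + y) = f x + f y.
Proof. by move=> h x y; have := h 1 x y; rewrite !scale1r. Qed.
Lemma lin0 (f : V -> V) : (forall (a : R[i]) x y, f (a *: x + y) = a *: f x + f y) -> f 0 = 0.
Proof.
move=> h; have := lin_add h 0 0; rewrite addr0.
by move=> /(congr1 (fun v => v - f 0)) /=; rewrite subrr addrK => <-.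
Qed.
Lemma lin_scale (f : V -> V) : (forall (a : R[i]) x y, f (a *: x + y) = a *: f x + f y) ->
  forall a x, f (a *: x) = a *: f x.
Proof. by move=> h a x; rewrite -[a *: x]addr0 h lin0 // addr0. Qed.
Lemma lin_opp (f : V -> V) : (forall (a : R[i]) x y, f (a *: x + y) = a *: f x + f y) ->
  forall x, f (- x) = - f x.
Proof. by move=> h x; rewrite -scaleN1r lin_scale // scaleN1r. Qed.

Variable ip : V -> V -> R[i].
Hypothesis ipl : forall (a : R[i]) (x y z : V), ip (a *: x + y) z = a * ip x z + ip y z.
Hypothesis ipC : forall x y : V, ip y x = (ip x y)^*.

Lemma ipDl x y z : ip (x + y) z = ip x z + ip y z.
Proof. by have := ipl 1 x y z; rewrite scale1r mul1r. Qed.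
Lemma ip0l z : ip 0 z = 0.
Proof.
have := ipDl 0 0 z; rewrite addr0.
by move=> /(congr1 (fun v => v - ip 0 z)) /=; rewrite subrr addrK => <-.
Qed.
Lemma ipZl a x z : ip (a *: x) z = a * ip x z.
Proof. by rewrite -[a *: x]addr0 ipl ip0l addr0. Qed.
Lemma ipNl x z : ip (- x) z = - ip x z.
Proof. by rewrite -scaleN1r ipZl mulN1r. Qed.
Lemma ipDr x y z : ip z (x + y) = ip z x + ip z y.
Proof. by rewrite ipC ipDl rmorphD /= -!ipC. Qed.
Lemma ipZr a x z : ip z (a *: x) = conjc a * ip z x.
Proof. by rewrite ipC ipZl conjc_is_multiplicative -!ipC. Qed.
Lemma ip0r z : ip z 0 = 0.
Proof. by rewrite ipC ip0l conjc0. Qed.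
Lemma ipNr x z : ip z (- x) = - ip z x.
Proof. by rewrite ipC ipNl rmorphN /= -ipC. Qed.
End Alg.
Lemma dw_conj (R : realType) (W : Type) (sip : W -> W -> R[i]) (M D P : W -> W) :
  (forall z w, sip (P z) (P w) = sip z w) -> (forall z, exists u, P u = z) ->
  (forall u, M (P u) = P (D u)) -> dw sip M = dw sip D.
Proof.
move=> iso sur com; rewrite /dw; congr ereal_sup.
have sn u : snorm sip (P u) = snorm sip u by rewrite /snorm iso.
apply/seteqP; split => _ [z hz <-].
- have [u Pu] := sur z; subst z; exists u; first by rewrite /= -sn.
  by rewrite com iso !sn.
- exists (P z); first by rewrite /= sn.
  by rewrite com iso !sn.
Qed.
Section P1.
Variable R : realType.
Variable V : lmodType R[i].
Variable ip : V -> V -> R[i].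
Hypothesis ipl : forall (a : R[i]) (x y z : V), ip (a *: x + y) z = a * ip x z + ip y z.
Hypothesis ipC : forall x y : V, ip y x = (ip x y)^*.
Variable A : V -> V.
Hypothesis hA : forall (a : R[i]) x y, A (a *: x + y) = a *: A x + A y.

Definition cst : R[i] := ((Num.sqrt (2 : R))^-1)%:C.
Lemma cstJ : cst^* = cst. Proof. by rewrite /cst conjc_real. Qed.
Lemma cst2 : cst * cst * 2 = 1.
Proof.
have -> : (2 : R[i]) = (2 : R)%:C by rewrite rmorph_nat.
rewrite /cst -!rmorphM /=.
rewrite -invfM -expr2 sqr_sqrtr ?ler0n // mulVf //.
Qed.

Definition Pm (z : V * V) : V * V := (cst *: (z.1 + z.2), cst *: (z.2 - z.1)).

Lemma Pm_iso z w : ipA0 ip A (Pm z) (Pm w) = ipA0 ip A z w.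
Proof.
rewrite /ipA0 /ipA /Pm /=.
rewrite !(lin_scale hA) !(lin_add hA) !(lin_opp hA).
rewrite !(ipZl ipl) !(ipZr ipl ipC) !(ipDl ipl) !(ipDr ipl ipC) !(ipNl ipl) !(ipNr ipl ipC) cstJ.
rewrite -[RHS]mul1r -cst2; ring.
Qed.

Lemma Pm_sur z : exists u, Pm u = z.
Proof.
exists (cst *: (z.1 - z.2), cst *: (z.1 + z.2)); rewrite /Pm /=.
case: z => a b /=; congr pair.
- rewrite -scalerDr scalerA addrACA addNr addr0 -mulr2n -scaler_nat scalerA.
  by rewrite -[cst * cst * _]/(cst * cst * 2) cst2 scale1r.
- rewrite -scalerBr scalerA opprB addrC addrA subrK -mulr2n -scaler_nat scalerA.
  by rewrite cst2 scale1r.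
Qed.

Variables S T : V -> V.
Hypothesis hS : forall (a : R[i]) x y, S (a *: x + y) = a *: S x + S y.
Hypothesis hT : forall (a : R[i]) x y, T (a *: x + y) = a *: T x + T y.

Lemma Pm_com u : opmat S T T S (Pm u) =
   Pm (opmat (fun x => S x - T x) (fun _ => 0) (fun _ => 0) (fun x => S x + T x) u).
Proof.
case: u => a b; rewrite /opmat /Pm /=.
rewrite !(lin_scale hS) !(lin_scale hT) !(lin_add hS) !(lin_add hT) !(lin_opp hS) !(lin_opp hT).
rewrite !addr0 !add0r -!scalerDr.
congr pair.
- by rewrite [in RHS]addrACA [- T a + _]addrC.
- by rewrite opprB addrACA [in RHS]addrACA [T a + S b]addrC.
Qed.

Lemma part1 : dw (ipA0 ip A) (opmat S T T S) =
     dw (ipA0 ip A) (opmat (fun x => S x - T x) (fun _ => 0)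
                           (fun _ => 0) (fun x => S x + T x)).
Proof. apply: (dw_conj (P := Pm)); [exact: Pm_iso | exact: Pm_sur | exact: Pm_com]. Qed.
End P1.
Lemma lin_ge0 (R : realType) (c k : R) : (forall t : R, 0 <= c + t * k) -> k = 0.
Proof.
move=> H; apply/eqP; apply/negP => /negP nk.
have := H (- (c + 1) / k); rewrite mulrAC -mulrA divff // mulr1; lra.
Qed.

Lemma key_dcs (R : realType) (c a b : R[i]) :
  (forall l : R[i], 0 <= c + conjc l * a + l * b) -> a = 0.
Proof.
case: c a b => c1 c2 [a1 a2] [b1 b2] H.
have HR t1 t2 : 0 <= c1 + t1 * (a1 + b1) + t2 * (a2 - b2).
  have := H (t1 +i* t2); rewrite lecE /= => /andP [_]; simpc; nra.
have HI t1 t2 : c2 + t1 * (a2 + b2) + t2 * (b1 - a1) = 0.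
  have := H (t1 +i* t2); rewrite lecE /= => /andP [/eqP + _]; simpc; nra.
have e1 : a1 + b1 = 0 by apply: (lin_ge0 (c := c1)) => t; have := HR t 0; lra.
have e2 : a2 - b2 = 0 by apply: (lin_ge0 (c := c1)) => t; have := HR 0 t; lra.
have e3 := HI 0 0; have e4 := HI 1 0; have e5 := HI 0 1.
have -> : a1 = 0 by lra.
have -> : a2 = 0 by lra.
by [].
Qed.
Lemma ReD (R : realType) (u v : R[i]) : complex.Re (u + v) = complex.Re u + complex.Re v. Proof. by case: u => ? ?; case: v. Qed.
Lemma ImD (R : realType) (u v : R[i]) : complex.Im (u + v) = complex.Im u + complex.Im v. Proof. by case: u => ? ?; case: v. Qed.
Lemma ReN (R : realType) (u : R[i]) : complex.Re (- u) = - complex.Re u. Proof. by case: u. Qed.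
Lemma ImN (R : realType) (u : R[i]) : complex.Im (- u) = - complex.Im u. Proof. by case: u. Qed.
Lemma Renorm2 (R : realType) (z : R[i]) : complex.Re `|z| ^+ 2 = complex.Re z ^+ 2 + complex.Im z ^+ 2.
Proof. by rewrite normc_def /= sqr_sqrtr // addr_ge0 ?sqr_ge0. Qed.
Lemma sqrt4 (R : realType) (b : R) : 0 <= b -> Num.sqrt b ^+ 4 = b ^+ 2.
Proof. by move=> hb; rewrite (_ : 4 = 2 * 2)%N // exprM sqr_sqrtr. Qed.

Lemma tri3 (R : realType) (p1 q1 b1 p2 q2 b2 : R) :
  Num.sqrt ((p2 - p1) ^+ 2 + (q2 - q1) ^+ 2 + (b1 + b2) ^+ 2) <=
  Num.sqrt (p1 ^+ 2 + q1 ^+ 2 + b1 ^+ 2) + Num.sqrt (p2 ^+ 2 + q2 ^+ 2 + b2 ^+ 2).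
Proof.
set X1 := p1 ^+ 2 + q1 ^+ 2 + b1 ^+ 2; set X2 := p2 ^+ 2 + q2 ^+ 2 + b2 ^+ 2.
have X1p : 0 <= X1 by rewrite /X1; nra.
have X2p : 0 <= X2 by rewrite /X2; nra.
have s1 := sqrtr_ge0 X1; have s2 := sqrtr_ge0 X2.
rewrite -(ger0_norm (addr_ge0 s1 s2)) -sqrtr_sqr ler_sqrt ?sqr_ge0 //.
have e1 := sqr_sqrtr X1p; have e2 := sqr_sqrtr X2p.
have e3 : Num.sqrt X1 * Num.sqrt X2 = Num.sqrt (X1 * X2) by rewrite sqrtrM.
set w := - p1 * p2 - q1 * q2 + b1 * b2.
have hw : w <= Num.sqrt (X1 * X2).
  case: (lerP w 0) => hw0; first by apply: le_trans hw0 (sqrtr_ge0 _).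
  rewrite -(ger0_norm (ltW hw0)) -sqrtr_sqr ler_sqrt; last by rewrite mulr_ge0.
  have -> : X1 * X2 = w ^+ 2 + ((p1 * q2 - q1 * p2) ^+ 2 + (p1 * b2 + b1 * p2) ^+ 2
                       + (q1 * b2 + b1 * q2) ^+ 2) by rewrite /X1 /X2 /w; ring.
  by rewrite lerDl !addr_ge0 ?sqr_ge0.
have : (Num.sqrt X1 + Num.sqrt X2) ^+ 2 = X1 + X2 + 2 * Num.sqrt (X1 * X2).
  by rewrite -e3 sqrrD e1 e2; ring.
move=> ->; rewrite /X1 /X2; move: hw; rewrite /w; nra.
Qed.
Section P2.
Variable R : realType.
Variable V : lmodType R[i].
Variable ip : V -> V -> R[i].
Hypothesis ipl : forall (a : R[i]) (x y z : V), ip (a *: x + y) z = a * ip x z + ip y z.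
Hypothesis ipC : forall x y : V, ip y x = (ip x y)^*.
Variable A : V -> V.
Hypothesis hA : forall (a : R[i]) x y, A (a *: x + y) = a *: A x + A y.
Hypothesis posA : forall x, 0 <= ip (A x) x.
Variable S S' : V -> V.
Hypothesis hS : forall (a : R[i]) x y, S (a *: x + y) = a *: S x + S y.
Hypothesis adjS : forall x y, ip (S x) y = ip x (S' y).
Hypothesis ranS : forall x, exists y, S' (A x) = A y.

Definition nA x := complex.Re (ip (A x) x).

Lemma nA_ge0 x : 0 <= nA x.
Proof. by have := posA x; rewrite lecE => /andP [_]. Qed.

Lemma nA0_eq x : nA x = 0 -> ip (A x) x = 0.
Proof.
rewrite /nA => h; have := posA x; rewrite lecE => /andP [/eqP hI _].
move: h hI; case: (ip (A x) x) => a b /= -> ->; done.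
Qed.

Lemma dcs x : nA x = 0 -> forall w, ip (A w) x = 0.
Proof.
move=> /nA0_eq h0 w; apply: (key_dcs (c := ip (A w) w) (b := ip (A x) w)) => l.
have := posA (w + l *: x).
rewrite !(lin_add hA) !(lin_scale hA) !(ipDl ipl) !(ipDr ipl ipC) !(ipZl ipl) !(ipZr ipl ipC) h0.
by rewrite !mulr0 addr0.
Qed.

Lemma zeroS x : nA x = 0 -> ip (A (S x)) x = 0 /\ nA (S x) = 0.
Proof.
move=> h; split; first exact: dcs.
have [w hw] := ranS (S x).
rewrite /nA ipC adjS hw ipC dcs //= conjc0.
Qed.
Lemma ReMr (r : R) (z : R[i]) : complex.Re (r%:C * z) = r * complex.Re z.
Proof. by case: z => a b /=; simpc. Qed.
Lemma ImMr (r : R) (z : R[i]) : complex.Im (r%:C * z) = r * complex.Im z.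
Proof. by case: z => a b /=; simpc. Qed.

Lemma ip_scale2 (r : R) u v : ip (A (r%:C *: u)) (r%:C *: v) = (r * r)%:C * ip (A u) v.
Proof.
by rewrite (lin_scale hA) (ipZl ipl) (ipZr ipl ipC) conjc_real mulrA -rmorphM.
Qed.

Definition pa x := complex.Re (ip (A (S x)) x).
Definition qa x := complex.Im (ip (A (S x)) x).
Definition rr x := Num.sqrt (pa x ^+ 2 + qa x ^+ 2 + nA (S x) ^+ 2).

Lemma val_ipA x : Num.sqrt (complex.Re `|ipA ip A (S x) x| ^+ 2 + snorm (ipA ip A) (S x) ^+ 4) = rr x.
Proof.
rewrite /snorm Renorm2 sqrt4; last exact: nA_ge0.
by [].
Qed.

Definition Dm := opmat (fun x => 0 - S x) (fun _ : V => 0) (fun _ => 0) (fun x => 0 + S x).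

Lemma val_D z : Num.sqrt (complex.Re `|ipA0 ip A (Dm z) z| ^+ 2 + snorm (ipA0 ip A) (Dm z) ^+ 4)
  = Num.sqrt ((pa z.2 - pa z.1) ^+ 2 + (qa z.2 - qa z.1) ^+ 2 + (nA (S z.1) + nA (S z.2)) ^+ 2).
Proof.
rewrite /snorm Renorm2 sqrt4; last first.
  rewrite /ipA0 /ipA ReD; apply: addr_ge0; exact: nA_ge0.
rewrite /ipA0 /ipA /Dm /opmat /= !add0r !addr0 (lin_opp hA) !(ipNl ipl) (ipNr ipl ipC) opprK.
by rewrite !ReD !ImD ReN ImN /pa /qa /nA [- _ + _]addrC [- _ + _]addrC.
Qed.

Lemma scale_ub x : 0 < nA x -> ((rr x / nA x)%:E <= dw (ipA ip A) S)%E.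
Proof.
move=> hx; set t := nA x; set k := (Num.sqrt t)^-1.
have kk : k * k = t^-1 by rewrite /k -invfM -expr2 sqr_sqrtr // ltW.
apply: ereal_sup_ubound; exists (k%:C *: x).
  rewrite /= /snorm /ipA ip_scale2 kk ReMr -/(nA x) -/t mulVf ?sqrtr1 //.
  by apply: lt0r_neq0.
rewrite val_ipA /rr /pa /qa /nA (lin_scale hS) !ip_scale2 kk ReMr ImMr ReMr.
rewrite !exprMn -!mulrDr sqrtrM ?sqr_ge0 // sqrtr_sqr ger0_norm.
  by rewrite mulrC.
by rewrite invr_ge0 ltW.
Qed.
Lemma part2_main : dw (ipA0 ip A) Dm = dw (ipA ip A) S.
Proof.
have pa0 : pa 0 = 0 by rewrite /pa (ip0r ipl ipC).
have qa0 : qa 0 = 0 by rewrite /qa (ip0r ipl ipC).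
have nS0 : nA (S 0) = 0 by rewrite /nA (lin0 hS) (lin0 hA) (ip0l ipl).
apply/eqP; rewrite eq_le; apply/andP; split.
- apply: ge_ereal_sup => _ [z hz <-]; rewrite val_D.
  have ht : nA z.1 + nA z.2 = 1.
    move: hz; rewrite /= /snorm /ipA0 /ipA ReD -/(nA z.1) -/(nA z.2) => h.
    by rewrite -(sqr_sqrtr (addr_ge0 (nA_ge0 z.1) (nA_ge0 z.2))) h expr1n.
  have tri := tri3 (pa z.1) (qa z.1) (nA (S z.1)) (pa z.2) (qa z.2) (nA (S z.2)).
  rewrite -/(rr z.1) -/(rr z.2) in tri.
  have r1p := sqrtr_ge0 (pa z.1 ^+ 2 + qa z.1 ^+ 2 + nA (S z.1) ^+ 2).
  have r2p := sqrtr_ge0 (pa z.2 ^+ 2 + qa z.2 ^+ 2 + nA (S z.2) ^+ 2).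
  rewrite -/(rr z.1) in r1p; rewrite -/(rr z.2) in r2p.
  have t1p := nA_ge0 z.1; have t2p := nA_ge0 z.2.
  have rr0 x : nA x = 0 -> rr x = 0.
    move=> /zeroS [h1 h2]; rewrite /rr /pa /qa h1 h2 /=.
    by rewrite expr0n /= !addr0 sqrtr0.
  have [t10|t1n] := eqVneq (nA z.1) 0.
    have t2one : nA z.2 = 1 by move: ht; rewrite t10 add0r.
    have t2 : 0 < nA z.2 by rewrite t2one ltr01.
    apply: le_trans (scale_ub t2); rewrite lee_fin.
    by rewrite t2one divr1; move: tri; rewrite rr0 // add0r.
  have t1 : 0 < nA z.1 by rewrite lt0r t1n.
  have [t20|t2n] := eqVneq (nA z.2) 0.
    have t1one : nA z.1 = 1 by move: ht; rewrite t20 addr0.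
    apply: le_trans (scale_ub t1); rewrite lee_fin.
    by rewrite t1one divr1; move: tri; rewrite (rr0 z.2) // addr0.
  have t2 : 0 < nA z.2 by rewrite lt0r t2n.
  have e1 : rr z.1 = nA z.1 * (rr z.1 / nA z.1) by rewrite mulrC divfK.
  have e2 : rr z.2 = nA z.2 * (rr z.2 / nA z.2) by rewrite mulrC divfK.
  move: e1 e2; set u1 := rr z.1 / nA z.1; set u2 := rr z.2 / nA z.2 => e1 e2.
  have [u12|u21] := lerP u1 u2.
    apply: le_trans (scale_ub t2); rewrite lee_fin -/u2; nra.
  apply: le_trans (scale_ub t1); rewrite lee_fin -/u1; nra.
- rewrite /dw; apply: ereal_sup_le => _ [x hx <-]; exists (0, x).
    rewrite /= /snorm /ipA0 /ipA (lin0 hA) (ip0l ipl) add0r; exact: hx.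
  rewrite val_D val_ipA /= pa0 qa0 nS0 !subr0 add0r.
  by [].
Qed.
End P2.

Unset Implicit Arguments.
Set Strict Implicit.

Theorem lemma3p5 (R : realType) (V : lmodType R[i]) (ip : V -> V -> R[i])
    (A : V -> V) :
  is_hilbert ip -> positive_op ip A ->
  (forall S T : V -> V, in_BA ip A S -> in_BA ip A T ->
     dw (ipA0 ip A) (opmat S T T S) =
     dw (ipA0 ip A) (opmat (fun x => S x - T x) (fun _ => 0)
                           (fun _ => 0) (fun x => S x + T x))) /\
  (forall S : V -> V, in_BA ip A S ->
     dw (ipA0 ip A) (opmat (fun _ => 0) S S (fun _ => 0)) = dw (ipA ip A) S).
Proof.
move=> [[ipl [ipC _]] _] [[hA _] posA]; split.
- move=> S T [[hS _] _] [[hT _] _].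
  exact: (part1 ipl ipC hA hS hT).
- move=> S [[hS _] [S' [adj ran]]].
  have h0 : forall (a : R[i]) (x y : V), (fun _ : V => (0 : V)) (a *: x + y) = a *: (fun _ : V => (0 : V)) x + (fun _ : V => (0 : V)) y.
    by move=> a x y /=; rewrite scaler0 addr0.
  rewrite (part1 ipl ipC hA h0 hS).
  exact: (part2_main ipl ipC hA posA hS adj ran).
Qed.
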